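(* Let $\mathcal{P}$ be a finite nonempty set of stochastic trees and $\Pi$ any partition of $S_\mathcal{P}$ in which the start states of all trees in $\mathcal{P}$ lie in the same class. Then $P \preceq \mathcal{P}/\Pi$ for every $P \in \mathcal{P}$.
   Context: An LPTS is a tuple $\langle S,s^0,\alpha,\tau\rangle$ with finite state set $S$, start state $s^0$, finite action set $\alpha$, finite $\tau\subseteq S\times\alpha\times\mathrm{Dist}(S)$, where $\mathrm{Dist}(S)$ is the set of discrete probability distributions over $S$ (rational probabilities); write $s\xrightarrow{a}\mu$. A stochastic tree is an LPTS whose start state is in the support of no transition's distribution and every other state is in the support of exactly one transition's distribution. Strong simulation: for $\mu_1\in\mathrm{Dist}(S_1)$, $\mu_2\in\mathrm{Dist}(S_2)$, $R\subseteq S_1\times S_2$, $\mu_1\sqsubseteq_R\mu_2$ iff there is $w:S_1\times S_2\to\mathbb{Q}\cap[0,1]$ with $\sum_{s_2}w(s_1,s_2)=\mu_1(s_1)$, $\sum_{s_1}w(s_1,s_2)=\mu_2(s_2)$ and $w(s_1,s_2)>0\Rightarrow s_1Rs_2$; $R$ is a strong simulation iff $s_1Rs_2$ and $s_1\xrightarrow{a}\mu_1$ imply some $s_2\xrightarrow{a}\mu_2$ with $\mu_1\sqsubseteq_R\mu_2$; $L_1\preceq L_2$ iff a strong simulation relates the start states. $S_\mathcal{P}$ is the (disjoint) union of the state sets of the trees in $\mathcal{P}$. For a partition $\Pi$ of $S_\mathcal{P}$ with classes $E_\Pi$ and class $[s]$ of $s$, the quotient $\mathcal{P}/\Pi$ is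 the LPTS with states $E_\Pi$, start state the common class of the start states, actions $\bigcup_{P\in\mathcal{P}}\alpha_P$, and a transition $e\xrightarrow{a}\mu$ iff some tree $P\in\mathcal{P}$ has a transition $s\xrightarrow{a}\mu_p$ with $[s]=e$ and $\mu(e')=\sum_{s'\in e'}\mu_p(s')$ for all $e'\in E_\Pi$. *)

(* Defs.v *)
From HB Require Import structures.
From mathcomp Require Import all_boot all_order all_algebra.
Set Implicit Arguments. Unset Strict Implicit. Unset Printing Implicit Defensive.
Import Order.TTheory GRing.Theory Num.Theory.
Local Open Scope ring_scope.

(* The state set is a finite type, the action set a finite list (read as a set),
   the transition relation a finite list of triples (s, a, mu) where mu is a
   rational-valued function on states (required to be a distribution by [wf_lpts]). *)
Record lpts (A : eqType) := LPTS {
  st : finType;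
  start : st;
  acts : seq A;
  trans : seq (st * A * {ffun st -> rat})
}.

Definition is_dist (S : finType) (mu : {ffun S -> rat}) : bool :=
  [forall s, 0 <= mu s] && (\sum_s mu s == 1).

Definition wf_lpts (A : eqType) (L : lpts A) : bool :=
  uniq (trans L) &&
  all (fun t : st L * A * {ffun st L -> rat} => (t.1.2 \in acts L) && is_dist t.2) (trans L).

Definition stoch_tree (A : eqType) (L : lpts A) : bool :=
  wf_lpts L &&
  all (fun t : st L * A * {ffun st L -> rat} => t.2 (start L) == 0) (trans L) &&
  [forall s, (s != start L) ==>
     (count (fun t : st L * A * {ffun st L -> rat} => t.2 s != 0) (trans L) == 1%N)].

Definition lift_rel (S1 S2 : finType) (R : S1 -> S2 -> Prop)
  (mu1 : {ffun S1 -> rat}) (mu2 : {ffun S2 -> rat}) : Prop :=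
  exists w : S1 -> S2 -> rat,
    [/\ forall x y, 0 <= w x y <= 1,
        forall x, \sum_y w x y = mu1 x,
        forall y, \sum_x w x y = mu2 y
      & forall x y, 0 < w x y -> R x y].

Definition strong_sim (A : eqType) (L1 L2 : lpts A) (R : st L1 -> st L2 -> Prop) : Prop :=
  forall s1 s2 a mu1, R s1 s2 -> (s1, a, mu1) \in trans L1 ->
    exists mu2, (s2, a, mu2) \in trans L2 /\ lift_rel R mu1 mu2.

Definition simulated (A : eqType) (L1 L2 : lpts A) : Prop :=
  exists R, strong_sim R /\ R (start L1) (start L2).

Definition union_st (A : eqType) (I : finType) (P : I -> lpts A) : finType :=
  {i : I & st (P i)}.

Definition inj_st (A : eqType) (I : finType) (P : I -> lpts A) (i : I) (s : st (P i))
  : union_st P := Tagged (fun j => st (P j)) s.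

Definition class_t (T : finType) (Pi : {set {set T}}) : finType :=
  {B : {set T} | B \in Pi}.

Lemma pblock_in_partition (T : finType) (Pi : {set {set T}}) (x : T) :
  partition Pi [set: T] -> pblock Pi x \in Pi.
Proof. by move=> /andP[/eqP cov _]; apply: pblock_mem; rewrite cov inE. Qed.

Definition class_of (T : finType) (Pi : {set {set T}}) (hPi : partition Pi [set: T])
  (x : T) : class_t Pi :=
  exist _ (pblock Pi x) (pblock_in_partition x hPi).

(* Quotient P/Pi; i0 is used to name the (common) class of the start states. *)
Definition quotient (A : eqType) (I : finType) (P : I -> lpts A)
  (Pi : {set {set union_st P}}) (hPi : partition Pi [set: union_st P]) (i0 : I)
  : lpts A :=
  @LPTS A (class_t Pi)
    (class_of hPi (inj_st (start (P i0))))
    (flatten [seq acts (P i) | i <- enum I])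
    (flatten [seq [seq (class_of hPi (inj_st t.1.1), t.1.2,
                        [ffun e : class_t Pi =>
                           \sum_(s' : st (P i) | inj_st s' \in val e) t.2 s'])
                  | t : st (P i) * A * {ffun st (P i) -> rat} <- trans (P i)] | i <- enum I]).

(* Main.v *)
Require Import Defs.
From mathcomp Require Import all_boot all_order all_algebra.
Import Order.TTheory GRing.Theory Num.Theory.
Local Open Scope ring_scope.

Theorem lemma6 (A : eqType) (I : finType) (P : I -> lpts A) (i0 : I)
  (Pi : {set {set union_st P}}) (hPi : partition Pi [set: union_st P]) :
  (forall i, stoch_tree (P i)) ->
  (forall i j, pblock Pi (inj_st (start (P i))) = pblock Pi (inj_st (start (P j)))) ->
  forall i, simulated (P i) (quotient hPi i0).
Proof.
move=> Htree Hstart i.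
exists (fun (s : st (P i)) (e : st (quotient hPi i0)) => class_of hPi (inj_st s) = e).
split; last first.
  by apply: val_inj; rewrite /= (Hstart i i0).
move=> s1 s2 a mu1 <- Hin.
have /andP[/andP[/andP[_ Hall] _] _] := Htree i.
have /andP[_ /andP[/forallP Hnn /eqP Hsum]] := allP Hall _ Hin.
exists [ffun e : class_t Pi => \sum_(s' : st (P i) | inj_st s' \in val e) mu1 s'].
split.
  apply/flatten_mapP; exists i; first by rewrite mem_enum.
  by apply/mapP; exists (s1, a, mu1).
have memE : forall (x : st (P i)) (e : class_t Pi),
    (class_of hPi (inj_st x) == e) = (inj_st x \in val e).
  move=> x e; rewrite -val_eqE /=; apply/eqP/idP.
    move=> <-; rewrite mem_pblock; have /andP[/eqP -> _] := hPi; by rewrite inE.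
  move=> Hx; apply: def_pblock => //; [by have /and3P[] := hPi | exact: valP].
exists (fun x y => if class_of hPi (inj_st x) == y then mu1 x else 0).
split.
- move=> x y; case: ifP => _; last by rewrite lexx ler01.
  rewrite Hnn /= -Hsum (bigD1 x) //= lerDl; apply: sumr_ge0 => j _; exact: Hnn.
- move=> x; rewrite (bigD1 (class_of hPi (inj_st x))) //= eqxx big1 ?addr0 //.
  by move=> j /negbTE; rewrite eq_sym => ->.
- move=> y; rewrite ffunE [in RHS]big_mkcond /=; apply: eq_bigr => x _; by rewrite memE.
- move=> x y; case: ifP => [/eqP -> //|]; by rewrite ltxx.
Qed.
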